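(* For every $m\geqslant1$ and $n\geqslant1$, $$\mathcal{F}_m(n)=\prod_{p^\alpha\| n}\left(f_{m-1}(\alpha)-f_{m-1}(\alpha-1)\right),$$ $|\mathcal{F}_m(n)|\leqslant1$, and if $\mathcal{F}_m(n)\neq0$ then every prime $p$ dividing $n$ divides $n$ to exponent at least $2\uparrow\uparrow m$.
   Context: $H(n)$ is the height of the factorization tree of $n\geqslant1$: $H(1)=0$ and, for $n=p_1^{\alpha_1}\cdots p_k^{\alpha_k}>1$ with distinct primes $p_i$, $H(n)=1+\max_i H(\alpha_i)$. For $m\geqslant0$ and $n\geqslant1$, $f_m(n)=1$ if $H(n)\leqslant m$ and $0$ otherwise; in addition, by convention $f_m(0)=1$ for all $m\geqslant 0$ (so $f_0(\alpha)=1$ iff $\alpha\in\{0,1\}$). $\mathcal{F}_m$ is defined by $f_m(n)=\sum_{d\mid n}\mathcal{F}_m(d)$ for all $n\geqslant1$. Tetration: $a\uparrow\uparrow0=1$, $a\uparrow\uparrow b=a^{a\uparrow\uparrow(b-1)}$. The product is over prime powers exactly dividing $n$ (empty product $=1$). *)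

(* Defs.v *)
From mathcomp Require Import all_boot all_order all_algebra.
Set Implicit Arguments. Unset Strict Implicit. Unset Printing Implicit Defensive.
Import Order.TTheory GRing.Theory Num.Theory.

(* Height of the factorization tree, computed with fuel k.
   H(1) = 0 and H(n) = 1 + max_{p | n} H(logn p n) for n > 1.
   Since every exponent alpha of n satisfies alpha < n, fuel n suffices. *)
Fixpoint Hfuel (k n : nat) : nat :=
  match k with
  | 0 => 0
  | k'.+1 => if n <= 1 then 0
             else (\max_(p <- primes n) Hfuel k' (logn p n)).+1
  end.

Definition H (n : nat) : nat := Hfuel n n.

Definition f (m n : nat) : int :=
  if n == 0 then 1%R else if H n <= m then 1%R else 0%R.

Fixpoint tet (a b : nat) : nat :=
  match b with
  | 0 => 1
  | b'.+1 => a ^ tet a b'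
  end.

(* Main.v *)
Require Import Defs.
From mathcomp Require Import all_boot all_order all_algebra.
From mathcomp Require Import zify.
Import Order.TTheory GRing.Theory Num.Theory.

Lemma Hfuel_st k1 k2 n : (n <= k1)%N -> (n <= k2)%N -> Hfuel k1 n = Hfuel k2 n.
Proof.
elim: k1 k2 n => [|k1 IH] [|k2] n /=.
- by [].
- by rewrite leqn0 => /eqP -> _.
- by move=> _; rewrite leqn0 => /eqP ->.
move=> h1 h2; case: ifP => // n1; congr _.+1; apply: eq_big_seq => p.
rewrite -logn_gt0 => lg.
have n0 : (0 < n)%N by move: n1; clear; case: n.
have := ltn_logl p n0 => lt.
apply: IH; lia.
Qed.

Lemma H_eq n : H n = if (n <= 1)%N then 0%N else (\max_(p <- primes n) H (logn p n)).+1.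
Proof.
rewrite /H; case: n => [|n] //=; case: ifP => // n1; congr _.+1.
apply: eq_big_seq => p _.
have := ltn_logl p (isT : (0 < n.+1)%N) => lt.
apply: Hfuel_st; lia.
Qed.

Local Open Scope ring_scope.

Lemma prod01 (I : Type) (s : seq I) (b : pred I) :
  \prod_(x <- s) (if b x then 1 else 0 : int) = if all b s then 1 else 0.
Proof.
elim: s => [|x s IH]; first by rewrite big_nil.
by rewrite big_cons IH /=; case: (b x); rewrite ?mul1r ?mul0r.
Qed.

Lemma bigmax_seq_leq (I : Type) (s : seq I) (F : I -> nat) k :
  (\max_(i <- s) F i <= k)%N = all (fun i => F i <= k)%N s.
Proof.
elim: s => [|x s IH]; first by rewrite big_nil.
by rewrite big_cons geq_max IH.
Qed.

Lemma f_pos k n : (0 < n)%N -> f k n = if (H n <= k)%N then 1 else 0.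
Proof. by rewrite /f; case: n. Qed.

Lemma f_prod m n : (0 < m)%N -> (0 < n)%N ->
  f m n = \prod_(p <- primes n) f m.-1 (logn p n).
Proof.
move=> m0 n0; rewrite f_pos //.
rewrite (eq_big_seq (fun p => if (H (logn p n) <= m.-1)%N then 1 else 0 : int)); last first.
  by move=> p hp; rewrite f_pos // logn_gt0.
rewrite prod01 H_eq; case: (leqP n 1) => n1.
  by move: n0 n1; case: n => [|[|n]].
by rewrite -bigmax_seq_leq; case: m m0.
Qed.

Definition P (phi : nat -> int) d := \prod_(q <- primes d) phi (logn q d).

Lemma PM phi p i e : prime p -> ~~ (p %| e)%N -> (0 < e)%N -> (0 < i)%N ->
  P phi (p ^ i * e)%N = phi i * P phi e.
Proof.
move=> pp pe e0 i0.
have pi0 : (0 < p ^ i)%N by rewrite expn_gt0 prime_gt0.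
have hp : perm_eq (primes (p ^ i * e)) (p :: primes e).
  apply: uniq_perm; first exact: primes_uniq.
    by rewrite /= primes_uniq andbT mem_primes (negbTE pe) !andbF.
  by move=> q; rewrite primesM // primesX // primes_prime // !in_cons orbF orbC.
rewrite /P (perm_big _ hp) big_cons lognM // pfactorK // logn_coprime ?prime_coprime // addn0.
congr (_ * _); apply: eq_big_seq => q; rewrite mem_primes => /and3P[qp _ qe].
rewrite lognM // lognX logn_prime //.
have -> : (q == p) = false.
  by apply/eqP => qp'; move: pe; rewrite -qp' qe.
by rewrite muln0.
Qed.

Lemma lognPE p i e : prime p -> ~~ (p %| e)%N -> (0 < e)%N -> logn p (p ^ i * e) = i.
Proof.
move=> pp pe e0.
have pi0 : (0 < p ^ i)%N by rewrite expn_gt0 prime_gt0.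
by rewrite lognM // pfactorK // logn_coprime ?prime_coprime // addn0.
Qed.

Lemma pairs_mem (s t : seq nat) x :
  x \in flatten [seq [seq (a, b) | b <- t] | a <- s] -> x.2 \in t.
Proof. by case/flatten_mapP => a _ /mapP[b hb ->]. Qed.

Lemma DS (G : nat -> int) p a r : prime p -> (0 < r)%N -> ~~ (p %| r)%N ->
  \sum_(d <- divisors (p ^ a * r)%N) G d =
  \sum_(i <- iota 0 a.+1) \sum_(e <- divisors r) G (p ^ i * e)%N.
Proof.
move=> pp r0 pr.
have p0 : (0 < p)%N by rewrite prime_gt0.
have n0 : (0 < p ^ a * r)%N by rewrite muln_gt0 expn_gt0 p0.
have de e : e \in divisors r -> ~~ (p %| e)%N /\ (0 < e)%N.
  rewrite -dvdn_divisors // => er; split; last exact: dvdn_gt0 er.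
  by apply: contra pr => pe; apply: dvdn_trans er.
rewrite -(big_allpairs_dep (h := fun i e => p ^ i * e)%N).
apply: perm_big; apply: uniq_perm.
- exact: divisors_uniq.
- apply: allpairs_uniq; [exact: iota_uniq | exact: divisors_uniq |].
  move=> x y hx hy; have he := pairs_mem _ _ _ hx; have he' := pairs_mem _ _ _ hy.
  case: x hx he => i1 e1 _ /= he; case: y hy he' => j1 e2 _ /= he' /= h.
  have [pe1 e10] := de _ he; have [pe2 e20] := de _ he'.
  have ij : i1 = j1 by rewrite -(lognPE p i1 e1 pp pe1 e10) h (lognPE p j1 e2 pp pe2 e20).
  move: h; rewrite ij => /eqP; rewrite eqn_pmul2l ?expn_gt0 ?p0 // => /eqP ->.
  by [].
move=> d; rewrite -dvdn_divisors //; apply/idP/allpairsP.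
  move=> dn; have d0 : (0 < d)%N by apply: dvdn_gt0 dn.
  have [e ce de'] := pfactor_coprime pp d0.
  exists (logn p d, e) => /=; split.
  - suff : logn p d \in iota 0 a.+1 by [].
    rewrite mem_iota add0n ltnS.
    by have := dvdn_leq_log p n0 dn; rewrite lognPE.
  - have e0 : (0 < e)%N by move: d0; rewrite de' muln_gt0 => /andP[].
    rewrite -dvdn_divisors //.
    have : (e %| p ^ a * r)%N by apply: dvdn_trans dn; rewrite de' dvdn_mulr.
    have cep : coprime e (p ^ a) by rewrite coprime_sym; apply: coprimeXl.
    by rewrite Gauss_dvdr.
  - by rewrite mulnC.
move=> [[i e] [hi he ->]].
apply: dvdn_mul; first by apply: dvdn_exp2l; move: hi; rewrite mem_iota add0n ltnS.
by rewrite dvdn_divisors.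
Qed.

Lemma tele k a : \sum_(i <- iota 0 a.+1) (if i == 0%N then 1 else f k i - f k i.-1) = f k a.
Proof.
elim: a => [|a IH]; first by rewrite big_seq1.
rewrite -addn1 iotaD big_cat /= IH big_seq1 add0n /=.
by rewrite addrC subrK.
Qed.

Section Main.
Variable m : nat.
Hypothesis hm : (1 <= m)%N.
Let g := f m.-1.
Let phi k := g k - g k.-1.

Lemma SUM n : (0 < n)%N -> \sum_(d <- divisors n) P phi d = f m n.
Proof.
elim/ltn_ind: n => n IH n0.
case: (leqP n 1) => n1.
  have -> : n = 1%N by case: n n0 n1 {IH} => [|[|]].
  by rewrite big_seq1 /P big_nil f_pos.
have pp := pdiv_prime n1; set p := pdiv n in pp.
have p0 : (0 < p)%N by rewrite prime_gt0.
have [r cr nr] := pfactor_coprime pp n0.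
set a := logn p n in nr.
have a0 : (0 < a)%N by rewrite logn_gt0 mem_primes pp n0 pdiv_dvd.
have r0 : (0 < r)%N by move: n0; rewrite nr muln_gt0 => /andP[].
have pr : ~~ (p %| r)%N by rewrite -prime_coprime.
have rn : (r < n)%N.
  rewrite nr -{1}(muln1 r) ltn_pmul2l //.
  by rewrite -(expn0 p) ltn_exp2l // prime_gt1.
rewrite nr mulnC DS //.
have inner i : (i \in iota 0 a.+1) ->
    \sum_(e <- divisors r) P phi (p ^ i * e)%N =
    (if i == 0%N then 1 else phi i) * f m r.
  move=> _; rewrite -(IH r rn r0) big_distrr /=.
  apply: eq_big_seq => e he.
  have [pe e0] : ~~ (p %| e)%N /\ (0 < e)%N.
    move: he; rewrite -dvdn_divisors // => er; split; last exact: dvdn_gt0 er.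
    by apply: contra pr => pe; apply: dvdn_trans er.
  case: i => [|i]; first by rewrite expn0 mul1n mul1r.
  by rewrite PM.
rewrite (eq_big_seq _ inner) -big_distrl /= tele.
have -> : f m (p ^ a * r)%N = P (f m.-1) (p ^ a * r)%N.
  by rewrite f_prod // muln_gt0 expn_gt0 p0.
by rewrite PM // /P -f_prod.
Qed.

Lemma UNIQ (F : nat -> int)
  (hF : forall n : nat, (0 < n)%N -> f m n = \sum_(d <- divisors n) F d) :
  forall n, (0 < n)%N -> F n = P phi n.
Proof.
elim/ltn_ind => n IH n0.
have := hF n n0; rewrite -(SUM n n0).
rewrite !(big_rem n (divisors_id n0)) /=.
have E : \sum_(d <- rem n (divisors n)) F d = \sum_(d <- rem n (divisors n)) P phi d.
  apply: eq_big_seq.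
  move=> d; rewrite (mem_rem_uniq _ (divisors_uniq n)) => /andP[dn hd].
  move: hd; rewrite -dvdn_divisors // => hd.
  apply: IH; last exact: dvdn_gt0 hd.
  by rewrite ltn_neqAle dn dvdn_leq.
by rewrite E => h; exact: (esym (addIr _ h)).
Qed.

End Main.

Lemma Hbound k j : (0 < j)%N -> (j < tet 2 k.+1)%N -> (H j <= k)%N.
Proof.
elim: k j => [|k IH] j j0 jt.
  by have -> : j = 1%N by move: jt j0; rewrite /= expn1; case: j => [|[|]].
rewrite H_eq; case: (leqP j 1) => // j1.
rewrite ltnS bigmax_seq_leq; apply/allP => q hq.
have qp : prime q by move: hq; rewrite mem_primes => /andP[].
have l0 : (0 < logn q j)%N by rewrite logn_gt0.
apply: IH => //.
rewrite -(@ltn_exp2l 2) //; apply: leq_ltn_trans jt.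
apply: (@leq_trans (q ^ logn q j)).
  by rewrite leq_exp2r // prime_gt1.
exact: dvdn_leq j0 (pfactor_dvdnn q j).
Qed.

Lemma f_one k j : (j < tet 2 k.+1)%N -> f k j = 1.
Proof.
rewrite /f; case: j => [|j] //= jt.
by rewrite Hbound.
Qed.

Lemma f01 k n : f k n = 0 \/ f k n = 1.
Proof. by rewrite /f; case: ifP => _; [right | case: ifP => _; [right|left]]. Qed.

Theorem lemma1 (m : nat) (hm : (1 <= m)%N) (F : nat -> int)
  (hF : forall n : nat, (0 < n)%N -> f m n = \sum_(d <- divisors n) F d) :
  forall n : nat, (0 < n)%N ->
    [/\ F n = \prod_(p <- primes n)
                (f m.-1 (logn p n) - f m.-1 (logn p n).-1),
        `|F n| <= 1
      & F n != 0 -> forall p : nat, prime p -> (p %| n)%N ->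
          (tet 2 m <= logn p n)%N].
Proof.
move=> n n0.
have FE : F n = \prod_(p <- primes n)
                (f m.-1 (logn p n) - f m.-1 (logn p n).-1) := @UNIQ m hm F hF n n0.
split.
- exact: FE.
- rewrite FE; apply: (big_ind (fun x : int => `|x| <= 1)).
  + by rewrite normr1.
  + by move=> x y hx hy; rewrite normrM mulr_ile1.
  + by move=> q _; case: (f01 m.-1 (logn q n)) => ->; case: (f01 m.-1 (logn q n).-1) => ->.
- move=> Fn0 p pp pn; rewrite leqNgt; apply/negP => lt.
  move: Fn0; rewrite FE (big_rem p); last by rewrite mem_primes pp n0 pn.
  have mE : m = (m.-1).+1 by case: m hm {hF FE lt}.
  rewrite mE in lt.
  rewrite !f_one //; last exact: leq_ltn_trans (leq_pred _) lt.
  by rewrite /= subrr mul0r eqxx.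
Qed.
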